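(* Let $(X_1,X_2)\sim BDEW(\alpha,p,\beta_1,\beta_2,\beta_3)$ with $\alpha>0$, $0<p<1$, $\beta_1,\beta_2,\beta_3>0$. Then $$P(X_1<X_2)=\sum_{i=0}^{\infty}\Big\{[1-p^{(i+2)^{\alpha}}]^{\beta_2}-[1-p^{(i+1)^{\alpha}}]^{\beta_2}\Big\}[1-p^{(i+1)^{\alpha}}]^{\beta_1+\beta_3}.$$
   Context: The exponentiated discrete Weibull distribution $EDW(\alpha,p,\beta)$ ($\alpha,\beta>0$, $0<p<1$) is the distribution on $\mathbb{N}_0=\{0,1,2,\dots\}$ with cumulative distribution function $F_{EDW}(x;\alpha,p,\beta)=[1-p^{([x]+1)^{\alpha}}]^{\beta}$ for real $x\ge 0$, where $[x]$ is the largest integer $\le x$. The bivariate discrete exponentiated Weibull distribution $BDEW(\alpha,p,\beta_1,\beta_2,\beta_3)$ is the distribution of $(X_1,X_2)=(\max\{V_1,V_3\},\max\{V_2,V_3\})$ where $V_1,V_2,V_3$ are independent with $V_i\sim EDW(\alpha,p,\beta_i)$. *)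

(* Defs.v *)
From HB Require Import structures.
From mathcomp Require Import all_boot all_order all_algebra.
From mathcomp Require Import all_classical all_reals all_analysis.
Import Order.TTheory GRing.Theory Num.Theory.
Local Open Scope ring_scope.

(* CDF of the exponentiated discrete Weibull distribution EDW(alpha,p,beta)
   evaluated at x : nat (for real x >= 0 it is the value at [x]):
   F(x) = [1 - p^((x+1)^alpha)]^beta. *)
Definition EDW_cdf {R : realType} (alpha p beta : R) (x : nat) : R :=
  (1 - p `^ ((x.+1)%:R `^ alpha)) `^ beta.

(* Main.v *)
Require Import Defs.
From HB Require Import structures.
From mathcomp Require Import all_boot all_order all_algebra.
From mathcomp Require Import all_classical all_reals all_analysis.
From mathcomp Require Import zify.
Import Order.TTheory GRing.Theory Num.Theory.
Local Open Scope classical_set_scope.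
Local Open Scope ring_scope.

Section Helpers.
Context (R : realType) (d : measure_display) (T : measurableType d)
  (P : probability T R).

Lemma meas_le (V : T -> nat) (mV : forall n, measurable (V @^-1` [set n])) n :
  measurable [set w | (V w <= n)%N].
Proof.
elim: n => [|n IH].
  suff -> : [set w | (V w <= 0)%N] = V @^-1` [set 0%N] by [].
  by apply/seteqP; split => w /=; rewrite /preimage /=; lia.
suff -> : [set w | (V w <= n.+1)%N] = [set w | (V w <= n)%N] `|` V @^-1` [set n.+1].
  exact: measurableU.
by apply/seteqP; split => w /=; rewrite /preimage /=; lia.
Qed.

Lemma sum_le E (mE : measurable E) (V : T -> nat)
  (mV : forall n, measurable (V @^-1` [set n])) n :
  P (E `&` [set w | (V w <= n)%N]) = (\sum_(a < n.+1) P (E `&` V @^-1` [set (a : nat)]))%E.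
Proof.
elim: n => [|n IH].
  rewrite big_ord_recr big_ord0 /= add0e.
  suff -> : [set w | (V w <= 0)%N] = V @^-1` [set 0%N] by [].
  by apply/seteqP; split => w /=; rewrite /preimage /=; lia.
rewrite big_ord_recr /= -IH.
have -> : E `&` [set w | (V w <= n.+1)%N] =
   (E `&` [set w | (V w <= n)%N]) `|` (E `&` V @^-1` [set n.+1]).
  apply/seteqP; split => w /=; rewrite /preimage /=.
    move=> [Ew h]; case: (ltngtP (V w) n.+1) => h'; [left|lia|right]; split => //; lia.
  by move=> [[Ew h]|[Ew h]]; split => //; lia.
rewrite measureU //.
- by apply: measurableI => //; exact: meas_le.
- exact: measurableI.
- apply/seteqP; split => w //= [[_ h1] [_ h2]]; move: h2; rewrite /preimage /=; lia.
Qed.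

End Helpers.

Theorem mainTheorem4 (R : realType) (d : measure_display) (T : measurableType d)
  (P : probability T R) (alpha p b1 b2 b3 : R) (V1 V2 V3 : T -> nat) :
  0 < alpha -> 0 < p -> p < 1 -> 0 < b1 -> 0 < b2 -> 0 < b3 ->
  (* V1, V2, V3 are (discrete) random variables *)
  (forall n : nat, measurable (V1 @^-1` [set n])) ->
  (forall n : nat, measurable (V2 @^-1` [set n])) ->
  (forall n : nat, measurable (V3 @^-1` [set n])) ->
  (* V_i ~ EDW(alpha, p, beta_i) *)
  (forall x : nat, P [set w | (V1 w <= x)%N] = (EDW_cdf alpha p b1 x)%:E) ->
  (forall x : nat, P [set w | (V2 w <= x)%N] = (EDW_cdf alpha p b2 x)%:E) ->
  (forall x : nat, P [set w | (V3 w <= x)%N] = (EDW_cdf alpha p b3 x)%:E) ->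
  (* V1, V2, V3 are mutually independent *)
  (forall a b c : nat,
      P [set w | V1 w = a /\ V2 w = b /\ V3 w = c] =
      (P (V1 @^-1` [set a]) * P (V2 @^-1` [set b]) * P (V3 @^-1` [set c]))%E) ->
  (* (X1, X2) = (max V1 V3, max V2 V3);  P(X1 < X2) = ... *)
  P [set w | (maxn (V1 w) (V3 w) < maxn (V2 w) (V3 w))%N] =
  (\sum_(0 <= i <oo)
     (((1 - p `^ ((i.+2)%:R `^ alpha)) `^ b2 - (1 - p `^ ((i.+1)%:R `^ alpha)) `^ b2)
       * (1 - p `^ ((i.+1)%:R `^ alpha)) `^ (b1 + b3))%:E)%E.
Proof.
move=> ha hp0 hp1 hb1 hb2 hb3 m1 m2 m3 F1 F2 F3 ind.
set q1 := fun a => fine (P (V1 @^-1` [set a])).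
set q2 := fun a => fine (P (V2 @^-1` [set a])).
set q3 := fun a => fine (P (V3 @^-1` [set a])).
have P1 a : P (V1 @^-1` [set a]) = (q1 a)%:E by rewrite fineK // fin_num_measure.
have P2 a : P (V2 @^-1` [set a]) = (q2 a)%:E by rewrite fineK // fin_num_measure.
have P3 a : P (V3 @^-1` [set a]) = (q3 a)%:E by rewrite fineK // fin_num_measure.
have G1 n : EDW_cdf alpha p b1 n = \sum_(a < n.+1) q1 a.
  apply: EFin_inj; rewrite -F1 -sumEFin -[X in P X]setTI sum_le //.
  by apply: eq_bigr => a _; rewrite setTI P1.
have G2 n : EDW_cdf alpha p b2 n = \sum_(a < n.+1) q2 a.
  apply: EFin_inj; rewrite -F2 -sumEFin -[X in P X]setTI sum_le //.
  by apply: eq_bigr => a _; rewrite setTI P2.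
have G3 n : EDW_cdf alpha p b3 n = \sum_(a < n.+1) q3 a.
  apply: EFin_inj; rewrite -F3 -sumEFin -[X in P X]setTI sum_le //.
  by apply: eq_bigr => a _; rewrite setTI P3.
pose A i := [set w | (V1 w <= i)%N /\ V2 w = i.+1 /\ (V3 w <= i)%N].
have eA i : A i = ([set w | (V1 w <= i)%N] `&` V2 @^-1` [set i.+1]) `&` [set w | (V3 w <= i)%N].
  apply/seteqP; split => w /=; rewrite /preimage /=.
    by move=> [h1 [h2 h3]].
  by move=> [[h1 h2] h3].
have mA i : measurable (A i).
  by rewrite eA; apply: measurableI; [apply: measurableI => //|]; exact: meas_le.
have HA i : P (A i) = (q2 i.+1 * EDW_cdf alpha p b1 i * EDW_cdf alpha p b3 i)%:E.
  rewrite eA sum_le //; last by apply: measurableI => //; exact: meas_le.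
  transitivity (\sum_(c < i.+1) \sum_(a < i.+1) (q1 a * q2 i.+1 * q3 c)%:E)%E.
    apply: eq_bigr => c _.
    rewrite (_ : ([set w | (V1 w <= i)%N] `&` V2 @^-1` [set i.+1]) `&` V3 @^-1` [set (c:nat)] = (V2 @^-1` [set i.+1] `&` V3 @^-1` [set (c:nat)]) `&` [set w | (V1 w <= i)%N]); last first.
      apply/seteqP; split => w /=; rewrite /preimage /=.
        tauto.
      tauto.
    rewrite sum_le //; last exact: measurableI.
    apply: eq_bigr => a _.
    rewrite (_ : (V2 @^-1` [set i.+1] `&` V3 @^-1` [set (c:nat)]) `&` V1 @^-1` [set (a:nat)] = [set w | V1 w = a /\ V2 w = i.+1 /\ V3 w = c]); last first.
      apply/seteqP; split => w /=; rewrite /preimage /=.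
        tauto.
      tauto.
    by rewrite ind P1 P2 P3.
  under eq_bigr do rewrite sumEFin.
  rewrite sumEFin; congr (_%:E).
  rewrite G1 G3 mulrC big_distrl /=; apply: eq_bigr => c _.
  rewrite [RHS]mulrC [q2 _ * _]mulrC -mulrA big_distrl /=; apply: eq_bigr => a _.
  by rewrite mulrA.
have -> : [set w | (maxn (V1 w) (V3 w) < maxn (V2 w) (V3 w))%N] = \bigcup_i A i.
  apply/seteqP; split => w /=.
    move=> h; exists (V2 w).-1 => //; rewrite /A /=; lia.
  by move=> [i _]; rewrite /A /=; lia.
transitivity (\sum_(0 <= i <oo) P (A i))%E.
  apply/esym/cvg_lim => //; apply: measure_sigma_additive => //.
  move=> i j _ _ [w [[_ [h1 _]] [_ [h2 _]]]]; lia.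
apply: eq_eseriesr => i _; rewrite HA; congr (_%:E).
have -> : q2 i.+1 = EDW_cdf alpha p b2 i.+1 - EDW_cdf alpha p b2 i.
  by rewrite !G2 [in RHS]big_ord_recr /= addrC addrK.
rewrite -mulrA /EDW_cdf -powRD //.
by rewrite gt_eqF // addr_gt0.
Qed.
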